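(* Let $M=(S,\mathrm{Act},P)$ be an MDP, $T\subseteq S$, $\mathrm{opt}\in\{\min,\max\}$, and let $r\in\mathbb{N}_\infty^S$ satisfy $D^{\overline{\mathrm{opt}}}(r)\le r$ (pointwise). Then for all $s\in S$: if $r(s)<\infty$ then $\Pr^{\mathrm{opt}}_s(\Diamond T)>0$.
   Context: An MDP is a tuple $M=(S,\mathrm{Act},P)$ with $S$ finite, $\mathrm{Act}$ finite, $P\colon S\times\mathrm{Act}\times S\to[0,1]$ with $\sum_{s'}P(s,a,s')\in\{0,1\}$; $\mathrm{Act}(s)=\{a\mid\sum_{s'}P(s,a,s')=1\}$ is nonempty for all $s$; $\mathrm{Post}(s,a)=\{s'\mid P(s,a,s')>0\}$. A strategy is $\sigma\colon S\to\mathrm{Act}$ with $\sigma(s)\in\mathrm{Act}(s)$, inducing a Markov chain with transitions $P(s,\sigma(s),\cdot)$; $\Pr^\sigma_s(\Diamond T)$ is the probability of visiting $T$ from $s$, and $\Pr^{\mathrm{opt}}_s(\Diamond T)=\mathrm{opt}_\sigma\Pr^\sigma_s(\Diamond T)$. $\overline{\min}=\max$, $\overline{\max}=\min$. $\mathbb{N}_\infty=\mathbb{N}\cup\{\infty\}$ with $1+\infty=\infty$. For $\mathrm{opt}'\in\{\min,\max\}$ the distance operator $D^{\mathrm{opt}'}\colon\mathbb{N}_\infty^S\to\mathbb{N}_\infty^S$ is $D^{\mathrm{opt}'}(r)(s)=0$ for $s\in T$ and $1+\mathrm{opt}'_{a\in\mathrm{Act}(s)}\min_{s'\in\mathrm{Post}(s,a)}r(s')$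 for $s\notin T$. *)

(* Defs.v *)
From HB Require Import structures.
From mathcomp Require Import all_boot all_order all_algebra.
From mathcomp Require Import classical_sets reals.
Set Implicit Arguments. Unset Strict Implicit. Unset Printing Implicit Defensive.
Import Order.TTheory GRing.Theory Num.Theory.
Local Open Scope classical_set_scope.
Local Open Scope ring_scope.

Section MDP.
Variables (R : realType) (S Act : finType) (P : S -> Act -> S -> R).

Definition enabled (s : S) : pred Act := fun a => \sum_(s' : S) P s a s' == 1.
Definition post (s : S) (a : Act) : pred S := fun s' => 0 < P s a s'.

Definition is_MDP : Prop :=
  (forall s a s', 0 <= P s a s' <= 1) /\
  (forall s a, \sum_(s' : S) P s a s' = 0 \/ \sum_(s' : S) P s a s' = 1) /\
  (forall s, exists a, enabled s a).

Definition strategy (sigma : S -> Act) : Prop := forall s, enabled s (sigma s).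

Fixpoint reach_le (T : {set S}) (sigma : S -> Act) (n : nat) (s : S) : R :=
  if s \in T then 1 else
  match n with
  | 0 => 0
  | n'.+1 => \sum_(s' : S) P s (sigma s) s' * reach_le T sigma n' s'
  end.

Definition reach_prob (T : {set S}) (sigma : S -> Act) (s : S) : R :=
  sup (range (fun n => reach_le T sigma n s)).

End MDP.

Inductive opt_t := Min | Max.
Definition opt_dual (o : opt_t) : opt_t := if o is Min then Max else Min.

Definition opt_reach_prob (R : realType) (S Act : finType) (P : S -> Act -> S -> R)
    (o : opt_t) (T : {set S}) (s : S) : R :=
  let vals := [set reach_prob P T sigma s | sigma in [set sigma | strategy P sigma]] in
  if o is Min then inf vals else sup vals.

(* ---------- N_infty = nat + {infty}, represented as option nat (None = infty) ---------- *)
Definition ninf := option nat.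
Definition ninf_le (x y : ninf) : bool :=
  match x, y with
  | _, None => true
  | None, Some _ => false
  | Some m, Some n => (m <= n)%N
  end.
Definition ninf_min (x y : ninf) : ninf := if ninf_le x y then x else y.
Definition ninf_max (x y : ninf) : ninf := if ninf_le x y then y else x.
Definition ninf_succ (x : ninf) : ninf := if x is Some n then Some n.+1 else None.
(* infty is the neutral element of min, 0 that of max *)
Definition ninf_opt (o : opt_t) : ninf -> ninf -> ninf :=
  if o is Min then ninf_min else ninf_max.
Definition ninf_opt_idx (o : opt_t) : ninf := if o is Min then None else Some 0%N.

Definition dist_op (R : realType) (S Act : finType) (P : S -> Act -> S -> R)
    (T : {set S}) (o' : opt_t) (r : S -> ninf) (s : S) : ninf :=
  if s \in T then Some 0%N
  else ninf_succ (\big[ninf_opt o' / ninf_opt_idx o']_(a | enabled P s a)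
                    \big[ninf_min / None]_(s' | post P s a s') r s').

(* Main.v *)
Require Import Defs.
From HB Require Import structures.
From mathcomp Require Import all_boot all_order all_algebra.
From mathcomp Require Import classical_sets reals.
Import Order.TTheory GRing.Theory Num.Theory.
Local Open Scope ring_scope.

Lemma big_ge_elem (X : Type) (I : eqType) (op : X -> X -> X) (idx : X)
  (le : X -> X -> bool) (Pr : pred I) (F : I -> X) :
  (forall x y z, le x y -> le y z -> le x z) ->
  (forall x, le x x) ->
  (forall x y, le x (op x y)) -> (forall x y, le y (op x y)) ->
  forall (js : seq I) i, i \in js -> Pr i -> le (F i) (\big[op/idx]_(j <- js | Pr j) F j).
Proof.
move=> tr rf hl hr; elim=> [|j js IH] i //=; rewrite inE big_cons.
case/orP=> [/eqP->|hi] hp.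
  by rewrite hp.
case: (Pr j); last exact: IH.
by apply: tr (IH _ hi hp) _.
Qed.

Lemma big_min_some (I : eqType) (js : seq I) (Pr : pred I) (F : I -> ninf) k :
  \big[ninf_min/None]_(j <- js | Pr j) F j = Some k -> exists i, Pr i /\ F i = Some k.
Proof.
pose K x := x = None \/ exists i, Pr i /\ F i = x.
have : K (\big[ninf_min/None]_(j <- js | Pr j) F j).
  apply: big_ind; first by left.
    by move=> x y hx hy; rewrite /ninf_min; case: ifP.
  by move=> i hi; right; exists i.
by case=> [->//|[i [hi hF]]] hb; exists i; rewrite hF hb.
Qed.

Lemma ninf_le_trans x y z : ninf_le x y -> ninf_le y z -> ninf_le x z.
Proof. by case: x y z => [a|] [b|] [c|] //=; apply: leq_trans. Qed.
Lemma ninf_le_refl x : ninf_le x x.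
Proof. by destruct x as [n|] => //=; apply: leqnn. Qed.
Lemma ninf_le_maxl x y : ninf_le x (ninf_max x y).
Proof.
rewrite /ninf_max; case: ifP=> // h; destruct x as [a|]; destruct y as [b|] => //=; exact: ninf_le_refl.
Qed.
Lemma ninf_le_maxr x y : ninf_le y (ninf_max x y).
Proof.
rewrite /ninf_max; case: ifP=> h; first exact: ninf_le_refl.
destruct x as [a|]; destruct y as [b|] => //=; move: h => /= /negbT; rewrite -ltnNge; exact: ltnW.
Qed.

Section Proof.
Variables (R : realType) (S Act : finType) (P : S -> Act -> S -> R).
Hypothesis hP : is_MDP P.
Variable T : {set S}.

Lemma reach_le_ge0 sigma n s : 0 <= reach_le P T sigma n s.
Proof.
elim: n s=> [|n IH] s /=; case: ifP=> // _.
apply: sumr_ge0=> s' _; apply: mulr_ge0 => //.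
by case: hP=> h _; case/andP: (h s (sigma s) s').
Qed.

Lemma reach_le_le1 sigma n s : strategy P sigma -> reach_le P T sigma n s <= 1.
Proof.
move=> hs; elim: n s=> [|n IH] s /=; case: ifP=> // _.
have := hs s; rewrite /enabled => /eqP h1.
rewrite -h1; apply: ler_sum=> s' _.
rewrite -{2}(mulr1 (P s (sigma s) s')); apply: ler_wpM2l => //.
by case: hP=> h _; case/andP: (h s (sigma s) s').
Qed.

Lemma reach_prob_ge sigma n s : strategy P sigma ->
  reach_le P T sigma n s <= reach_prob P T sigma s.
Proof.
move=> hs; apply: ub_le_sup; last by exists n.
by exists 1=> x [m _ <-]; apply: reach_le_le1.
Qed.

Lemma reach_prob_le1 sigma s : strategy P sigma -> reach_prob P T sigma s <= 1.
Proof.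
move=> hs; apply: ge_sup; first by exists (reach_le P T sigma 0 s), 0%N.
by move=> x [m _ <-]; apply: reach_le_le1.
Qed.

Lemma min_pos : exists c : R, 0 < c /\ c <= 1 /\
  forall s a s', 0 < P s a s' -> c <= P s a s'.
Proof.
pose g (x : S * Act * S) := if 0 < P x.1.1 x.1.2 x.2 then P x.1.1 x.1.2 x.2 else 1.
exists (\big[Num.min/1]_(x <- index_enum _ | true) g x); split; last split.
- apply: (big_ind (fun x : R => 0 < x)) => //; first by move=> x y hx hy; rewrite lt_min hx hy.
  by move=> x _; rewrite /g; case: ifP.
- apply: (big_ind (fun x : R => x <= 1)) => //; first by move=> x y hx hy; rewrite ge_min hx.
  by move=> x _; rewrite /g; case: ifP => // h; case: hP => h0 _; case/andP: (h0 x.1.1 x.1.2 x.2).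
- move=> s a s' hp.
  have ml : forall x y : R, Num.min x y <= x by move=> x y; rewrite ge_min lexx.
  have mr : forall x y : R, Num.min x y <= y by move=> x y; rewrite ge_min lexx orbT.
  have := @big_ge_elem R _ Num.min 1 (fun x y => y <= x) xpredT g
     (fun x y z h1 h2 => le_trans h2 h1) (@lexx _ _)
     ml mr
     (index_enum _) (s, a, s') (mem_index_enum _) isT.
  by rewrite /g /= hp.
Qed.

Definition good (r : S -> ninf) (sigma : S -> Act) :=
  forall s m, s \notin T -> r s = Some m ->
    exists s' m', post P s (sigma s) s' /\ r s' = Some m' /\ (m' < m)%N.

Lemma good_bound r sigma c : strategy P sigma -> good r sigma ->
  0 < c -> c <= 1 -> (forall s a s', 0 < P s a s' -> c <= P s a s') ->
  forall n s m, r s = Some m -> (m <= n)%N -> c ^+ n <= reach_le P T sigma n s.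
Proof.
move=> hs hg c0 c1 hc; elim=> [|n IH] s m hr hm /=.
  case: ifP=> hT; first by rewrite expr0.
  have [s' [m' [_ [_]]]] := hg s m (negbT hT) hr.
  by move: hm; rewrite leqn0 => /eqP->.
case: ifP=> hT; first exact: exprn_ile1 (ltW c0) c1.
have [s' [m' [hpost [hr' hlt]]]] := hg s m (negbT hT) hr.
rewrite (bigD1 s') //=.
apply: (@le_trans _ _ (P s (sigma s) s' * reach_le P T sigma n s')); last first.
  rewrite lerDl; apply: sumr_ge0=> i _; apply: mulr_ge0; last exact: reach_le_ge0.
  by case: hP=> h _; case/andP: (h s (sigma s) i).
rewrite exprS; apply: ler_pM.
- exact: ltW.
- by apply: exprn_ge0; apply: ltW.
- exact: hc.
- apply: IH hr' _; by rewrite -ltnS; apply: leq_trans hlt hm.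
Qed.

End Proof.
Arguments min_pos {R S Act P}.
Arguments reach_prob_ge {R S Act P} hP {T sigma} n s.
Arguments reach_prob_le1 {R S Act P} hP {T} sigma s.
Arguments good {R S Act}.
Arguments good_bound {R S Act P} hP {T r sigma c} _ _ _ _ _ {n s m}.
Arguments big_min_some {I js Pr F k}.

Theorem proposition1 (R : realType) (S Act : finType) (P : S -> Act -> S -> R)
  (hP : is_MDP P) (T : {set S}) (o : opt_t) (r : S -> ninf) :
  (forall s, ninf_le (dist_op P T (opt_dual o) r s) (r s)) ->
  forall s, r s <> None -> 0 < opt_reach_prob P o T s.
Proof.
move=> hD s hs.
case E: (r s) hs=> [m|] // _.
have [c [c0 [c1 hc]]] := min_pos hP.
have hcn : 0 < c ^+ m by apply: exprn_gt0.
have hex : forall s, exists a, enabled P s a by case: hP=> _ [].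
rewrite /opt_reach_prob; case: o hD=> /= hD.
-
  have hg : forall sigma, strategy P sigma -> good P T r sigma.
    move=> sigma hs s0 m0 hT hr; have := hD s0; rewrite /dist_op (negbTE hT) hr.
    set B := \big[_/_]_(a | _) _.
    case EB: B=> [k|] //= hk.
    have := @big_ge_elem _ _ ninf_max (Some 0%N) ninf_le (enabled P s0)
      (fun a => \big[ninf_min/None]_(s' | post P s0 a s') r s')
      ninf_le_trans ninf_le_refl ninf_le_maxl ninf_le_maxr
      (index_enum _) (sigma s0) (mem_index_enum _) (hs s0).
    rewrite -/B EB.
    case EI: (\big[ninf_min/None]_(s' | post P s0 (sigma s0) s') r s')=> [j|] //= hj.
    have [s' [h1 h2]] := big_min_some EI.
    by exists s', j; split=> //; split=> //; apply: leq_ltn_trans hj hk.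
  apply: lt_le_trans hcn _; apply: lb_le_inf.
    exists (reach_prob P T (fun s => xchoose (hex s)) s).
    exists (fun s => xchoose (hex s)) => //.
    by rewrite /strategy /= => s0; apply: (xchooseP (hex s0)).
  move=> x [sigma hsig <-].
  apply: le_trans (reach_prob_ge hP _ _ hsig).
  exact: (good_bound hP hsig (hg _ hsig) c0 c1 hc E (leqnn m)).
-
  pose gd s0 a := enabled P s0 a && ((s0 \in T) || (r s0 == None) ||
     [exists s', post P s0 a s' && ninf_le (ninf_succ (r s')) (r s0)]).
  have hgex : forall s0, exists a, gd s0 a.
    move=> s0; rewrite /gd.
    case hT: (s0 \in T); first by have [a ha] := hex s0; exists a; rewrite ha.
    case hr: (r s0) => [m0|]; last first.
      by have [a ha] := hex s0; exists a; rewrite ha eqxx orbT.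
    have := hD s0; rewrite /dist_op hT hr.
    case EB: (\big[_/_]_(a | _) _) => [k|] //= hk.
    have [a [ha EI]] := big_min_some EB.
    have [s' [h1 h2]] := big_min_some EI.
    exists a; rewrite ha /=; apply/existsP; exists s'; by rewrite h1 h2.
  pose sigma s0 := xchoose (hgex s0).
  have hsig : strategy P sigma by move=> s0; case/andP: (xchooseP (hgex s0)).
  have hg : good P T r sigma.
    move=> s0 m0 hT hr; case/andP: (xchooseP (hgex s0)) => _.
    rewrite (negbTE hT) hr /= => /existsP [s' /andP [h1]].
    case E': (r s') => [j|] //= hj; by exists s', j.
  apply: lt_le_trans hcn _.
  apply: le_trans (good_bound hP hsig hg c0 c1 hc E (leqnn m)) _.
  apply: le_trans (reach_prob_ge hP _ _ hsig) _.
  apply: ub_le_sup; last by exists sigma.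
  by exists 1=> x [sg hsg <-]; apply: reach_prob_le1.
Qed.
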